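(* For every natural number $n\ge1$ and every balanced $\mathrm{HS}$ formula $\psi$ over $\{p\}$ with $|\psi|\le n$, $K_n\models_{\mathsf{st}}\psi$ if and only if $M_n\models_{\mathsf{st}}\psi$.
   Context: A Kripke structure over $\{p\}$ is $K=(\{p\},S,\delta,\mu,s_0)$ with states $S$, left-total $\delta\subseteq S\times S$, labelling $\mu:S\to2^{\{p\}}$, initial state $s_0$. A trace is a non-empty finite prefix of an infinite state sequence following $\delta$; initial if it starts at the initial state. For a finite word $w=w(0)\cdots w(n)$, $\mathrm{Pref}(w)=\{w[0,i]\mid0\le i\le n-1\}$, $\mathrm{Suff}(w)=\{w[i,n]\mid1\le i\le n\}$. For $n\ge1$: $S_n=\{s_0,s_1,\dots,s_{2n},t\}$, $\delta_n=\{(s_0,s_0),(s_0,s_1),(s_1,s_2),\dots,(s_{2n-1},s_{2n}),(s_{2n},t),(t,t)\}$, $\mu_n(s_i)=\emptyset$ for $0\le i\le 2n$, $\mu_n(t)=\{p\}$; $K_n=(\{p\},S_n,\delta_n,\mu_n,s_0)$ and $M_n=(\{p\},S_n,\delta_n,\mu_n,s_1)$ (they differ only in the initial state). $\mathrm{HS}$ formulas here are built from $p$, $\neg$, $\wedge$ and the primitive modalities $\langle B\rangle,\langle E\rangle,\langle\bar B\rangle,\langle\bar E\rangle$ (all other $\mathrm{HS}$ modalities being abbreviations); $|\psi|$ is the size of $\psi$ (its number of symbols/subformulas). $\psi$ is balanced if for each subformula $\langle B\rangle\theta$ or $\langle\bar B\rangle\theta$, $\theta$ has the form $\theta_1\wedge\theta_2$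 with $|\theta_1|=|\theta_2|$. State-based semantics over traces of $K$: $\rho\models p$ iff $p\in\mu(s)$ for every state $s$ of $\rho$; $\rho\models\langle B\rangle\psi$ iff some $\rho'\in\mathrm{Pref}(\rho)$ satisfies $\psi$; $\langle E\rangle\psi$: some $\rho'\in\mathrm{Suff}(\rho)$; $\langle\bar B\rangle\psi$: some trace $\rho'$ with $\rho\in\mathrm{Pref}(\rho')$; $\langle\bar E\rangle\psi$: some trace $\rho'$ with $\rho\in\mathrm{Suff}(\rho')$; Booleans as usual. $K\models_{\mathsf{st}}\psi$ iff every initial trace of $K$ satisfies $\psi$. *)

(* Defs.v *)
From mathcomp Require Import all_boot.
Set Implicit Arguments. Unset Strict Implicit. Unset Printing Implicit Defensive.

(* A Kripke structure over the single proposition p.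
   kmu s = true  iff  p \in mu(s). *)
Record kripke := Kripke {
  kst : Type;
  kdelta : kst -> kst -> Prop;
  kmu : kst -> bool;
  kinit : kst }.
Arguments kdelta : clear implicits.
Arguments kmu : clear implicits.
Arguments kinit : clear implicits.

Definition left_total (K : kripke) : Prop :=
  forall s : kst K, exists s', kdelta K s s'.

Definition trace (K : kripke) (rho : seq (kst K)) : Prop :=
  0 < size rho /\
  exists f : nat -> kst K,
    (forall i, kdelta K (f i) (f i.+1)) /\ rho = map f (iota 0 (size rho)).

Definition initial_trace (K : kripke) (rho : seq (kst K)) : Prop :=
  trace rho /\ head (kinit K) rho = kinit K.

Definition is_pref (T : Type) (r w : seq T) : Prop :=
  exists i, 0 < i < size w /\ r = take i w.
Definition is_suff (T : Type) (r w : seq T) : Prop :=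
  exists i, 0 < i < size w /\ r = drop i w.

Inductive hs : Type :=
  | HP : hs
  | HNeg : hs -> hs
  | HAnd : hs -> hs -> hs
  | HB : hs -> hs
  | HE : hs -> hs
  | HBbar : hs -> hs
  | HEbar : hs -> hs.

Fixpoint hs_size (f : hs) : nat :=
  match f with
  | HP => 1
  | HNeg g => (hs_size g).+1
  | HAnd g h => (hs_size g + hs_size h).+1
  | HB g | HE g | HBbar g | HEbar g => (hs_size g).+1
  end.

Fixpoint balanced (f : hs) : Prop :=
  match f with
  | HP => True
  | HNeg g => balanced g
  | HAnd g h => balanced g /\ balanced h
  | HE g | HEbar g => balanced g
  | HB g | HBbar g =>
      balanced g /\
      match g with
      | HAnd g1 g2 => hs_size g1 = hs_size g2
      | _ => False
      end
  end.

Fixpoint sat (K : kripke) (rho : seq (kst K)) (f : hs) : Prop :=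
  match f with
  | HP => all (kmu K) rho
  | HNeg g => ~ sat rho g
  | HAnd g h => sat rho g /\ sat rho h
  | HB g => exists r, is_pref r rho /\ sat r g
  | HE g => exists r, is_suff r rho /\ sat r g
  | HBbar g => exists r, trace r /\ is_pref rho r /\ sat r g
  | HEbar g => exists r, trace r /\ is_suff rho r /\ sat r g
  end.

Definition models_st (K : kripke) (f : hs) : Prop :=
  forall rho : seq (kst K), initial_trace rho -> sat rho f.

(* The structures K_n and M_n: states 'I_(2n+2), where i <= 2n is s_i
   and 2n+1 is t. *)
Definition Sn (n : nat) := 'I_(n.*2.+2).

Definition delta_n (n : nat) (x y : Sn n) : Prop :=
  ((x : nat) = 0 /\ (y : nat) = 0) \/
  ((x : nat) <= n.*2 /\ (y : nat) = x.+1) \/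
  ((x : nat) = n.*2.+1 /\ (y : nat) = n.*2.+1).

Definition mu_n (n : nat) (x : Sn n) : bool := (x : nat) == n.*2.+1.

Definition s0 (n : nat) : Sn n := @Ordinal (n.*2.+2) 0 isT.
Definition s1 (n : nat) : Sn n := @Ordinal (n.*2.+2) 1 isT.

Definition K_n (n : nat) : kripke := @Kripke (Sn n) (@delta_n n) (@mu_n n) (s0 n).
Definition M_n (n : nat) : kripke := @Kripke (Sn n) (@delta_n n) (@mu_n n) (s1 n).

(* Main.v *)
Require Import Defs.
From mathcomp Require Import all_boot.
From mathcomp Require Import zify.
Set Implicit Arguments. Unset Strict Implicit. Unset Printing Implicit Defensive.

Definition Kx (n : nat) (s : Sn n) : kripke := @Kripke (Sn n) (@delta_n n) (@mu_n n) s.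

Definition Q (n c K i : nat) : nat := minn n.*2.+1 ((i + c) - K).
Definition st (n v : nat) : Sn n := inord v.
Definition raw n c K len : seq (Sn n) := map (fun i => st n (Q n c K i)) (iota 0 len).

Lemma val_st n c K i : val (st n (Q n c K i)) = Q n c K i.
Proof. rewrite /st /= inordK // /Q; lia. Qed.

Lemma raw_eq n c K c' K' len len' : len = len' ->
  (forall i, i < len -> Q n c K i = Q n c' K' i) -> raw n c K len = raw n c' K' len'.
Proof.
move=> <- H; apply/eq_in_map => i; rewrite mem_iota add0n => /andP[_ Hi].
by rewrite H.
Qed.

Lemma size_raw n c K len : size (raw n c K len) = len.
Proof. by rewrite size_map size_iota. Qed.

Lemma take_raw n c K len i : i <= len -> take i (raw n c K len) = raw n c K i.
Proof. move=> H; rewrite /raw -map_take take_iota; congr map; congr iota; lia. Qed.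

Lemma drop_raw n c K len k : k <= len -> drop k (raw n c K len) = raw n (c + k) K (len - k).
Proof.
move=> H; rewrite /raw -map_drop drop_iota add0n.
rewrite -{1}(addn0 k) (iotaDl k 0) -map_comp; apply: eq_map => i /=; rewrite /Q.
by have -> : k + i + c = i + (c + k) by lia.
Qed.

Lemma nth_raw n c K len i : i < len -> val (nth (st n 0) (raw n c K len) i) = Q n c K i.
Proof.
move=> H; rewrite /raw (nth_map 0) ?size_iota // nth_iota // add0n; exact: val_st.
Qed.

Lemma raw_trace n (s : Sn n) c K len : 0 < len -> @trace (Kx s) (raw n c K len).
Proof.
move=> H; split; first by rewrite size_raw.
exists (fun i => st n (Q n c K i)); split; last by rewrite size_raw.
move=> i; rewrite /= /delta_n !val_st /Q; lia.
Qed.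
Lemma trace_raw n (s : Sn n) (rho : seq (Sn n)) : @trace (Kx s) rho ->
  exists c K, rho = raw n c K (size rho).
Proof.
case=> Hs [f [Hf Hr]].
suff: forall L, exists c K, forall i, i < L.+1 -> nat_of_ord (f i) = Q n c K i.
  case: (size rho) Hs Hr => // L _ -> /(_ L) [c [K H]]; exists c, K.
  apply/eq_in_map => i; rewrite mem_iota add0n => /andP[_ Hi].
  by apply: val_inj; rewrite /= val_st H.
elim=> [|L [c [K IH]]].
  exists (val (f 0)), 0 => i; rewrite ltnS leqn0 => /eqP ->.
  rewrite /Q /=; have := ltn_ord (f 0); lia.
have HL := IH L (ltnSn L).
have Hd := Hf L; rewrite /= /delta_n in Hd.
have Hb := ltn_ord (f L.+1).
case: Hd => [[H0 H1]|[[H0 H1]|[H0 H1]]].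
- exists c, (L.+1 + c) => i; rewrite ltnS leq_eqVlt => /orP[/eqP ->|Hi].
    rewrite H1 /Q; lia.
  rewrite IH //; move: HL; rewrite /Q; lia.
- case: (posnP (nat_of_ord (f L))) => Hv.
  + exists c, (L + c) => i; rewrite ltnS leq_eqVlt => /orP[/eqP ->|Hi].
      rewrite H1 /Q; lia.
    rewrite IH //; move: HL; rewrite /Q; lia.
  + exists c, K => i; rewrite ltnS leq_eqVlt => /orP[/eqP ->|Hi].
      rewrite H1; move: HL; rewrite /Q; lia.
    by rewrite IH.
- exists c, K => i; rewrite ltnS leq_eqVlt => /orP[/eqP ->|Hi].
    rewrite H1; move: HL; rewrite /Q; lia.
  by rewrite IH.
Qed.

Inductive wt := WA of nat & nat | WB of nat & nat | WC of nat.

Definition cw n w := match w with WA L j => j.+1 | WB _ _ => n.*2.+1 | WC _ => n.*2.+1 end.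
Definition Kw w := match w with WA L _ => L | WB a _ => a | WC _ => 0 end.
Definition lenw w := match w with WA L _ => L | WB a m => a + m | WC m => m end.
Definition word n w := raw n (cw n w) (Kw w) (lenw w).
Definition valid n w := match w with
  | WA L j => 0 < L /\ j <= n.*2 | WB a m => 0 < a /\ 0 < m | WC m => 0 < m end.
Definition prefT n w i := match w with
  | WA L j => WA i (j - (L - i))
  | WB a m => if a < i then WB a (i - a) else WA i (n.*2 - (a - i))
  | WC m => WC i end.
Definition sufT w k := match w with
  | WA L j => WA (L - k) j
  | WB a m => if k < a then WB (a - k) m else WC (a + m - k)
  | WC m => WC (m - k) end.

Lemma size_word n w : size (word n w) = lenw w.
Proof. exact: size_raw. Qed.

Lemma valid_len n w : valid n w -> 0 < lenw w.
Proof. case: w => /= *; lia. Qed.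

Lemma normalize n c K len : 0 < len -> exists w, valid n w /\ raw n c K len = word n w.
Proof.
move=> H.
case: (ltnP (Q n c K len.-1) n.*2.+1) => Hv.
  exists (WA len (Q n c K len.-1)); split; first by rewrite /=; lia.
  apply: raw_eq => // i Hi; move: Hv; rewrite /Q /=; lia.
case: (posnP ((K + n.*2.+1) - c)) => Ha.
  exists (WC len); split => //; apply: raw_eq => // i Hi; rewrite /Q /=; lia.
exists (WB ((K + n.*2.+1) - c) (len - ((K + n.*2.+1) - c))).
split; first by move: Hv; rewrite /= /Q; lia.
apply: raw_eq; first by move: Hv; rewrite /= /Q; lia.
move=> i Hi; rewrite /Q /=; lia.
Qed.

Lemma trace_word n (s : Sn n) rho : @trace (Kx s) rho -> exists w, valid n w /\ rho = word n w.
Proof.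
move=> Ht; have [Hs _] := Ht; have [c [K ->]] := trace_raw Ht.
exact: normalize.
Qed.

Lemma word_trace n (s : Sn n) w : valid n w -> @trace (Kx s) (word n w).
Proof. move/valid_len; exact: raw_trace. Qed.

Lemma valid_prefT n w i : valid n w -> 0 < i < lenw w -> valid n (prefT n w i).
Proof. case: w => [L j|a m|m] /=; try case: ifP => /=; lia. Qed.

Lemma valid_sufT n w k : valid n w -> 0 < k < lenw w -> valid n (sufT w k).
Proof. case: w => [L j|a m|m] /=; try case: ifP => /=; lia. Qed.

Lemma lenw_prefT n w i : valid n w -> 0 < i < lenw w -> lenw (prefT n w i) = i.
Proof. case: w => [L j|a m|m] /=; try case: ifP => /=; lia. Qed.

Lemma word_prefT n w i : valid n w -> 0 < i < lenw w -> take i (word n w) = word n (prefT n w i).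
Proof.
move=> Hv Hi; rewrite /word take_raw; last lia.
case: w Hv Hi => [L j|a m|m] /= Hv Hi; try case: ifP => /= Ha.
- apply: raw_eq => // k Hk; rewrite /Q; lia.
- apply: raw_eq => [|k Hk]; rewrite /Q; lia.
- apply: raw_eq => [|k Hk]; rewrite /Q; lia.
- by [].
Qed.

Lemma word_sufT n w k : valid n w -> 0 < k < lenw w -> drop k (word n w) = word n (sufT w k).
Proof.
move=> Hv Hi; rewrite /word drop_raw; last lia.
case: w Hv Hi => [L j|a m|m] /= Hv Hi; try case: ifP => /= Ha.
- apply: raw_eq => // i Hk; rewrite /Q; lia.
- apply: raw_eq => [|i Hk]; rewrite /Q; lia.
- apply: raw_eq => [|i Hk]; rewrite /Q; lia.
- apply: raw_eq => [|i Hk]; rewrite /Q; lia.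
Qed.

Lemma word_inj n w1 w2 : valid n w1 -> valid n w2 -> word n w1 = word n w2 -> w1 = w2.
Proof.
move=> V1 V2 E.
have Hl : lenw w1 = lenw w2 by rewrite -!(size_word n) E.
have H : forall i, i < lenw w1 -> Q n (cw n w1) (Kw w1) i = Q n (cw n w2) (Kw w2) i.
  move=> i Hi; rewrite -(nth_raw n _ _ Hi) -[in RHS](nth_raw n (cw n w2) (Kw w2) (len := lenw w2)); last lia.
  by rewrite /word in E; rewrite E.
clear E; case: w1 w2 V1 V2 Hl H => [L j|a m|m] [L' j'|a' m'|m'] /= V1 V2 Hl H.
- have := H L.-1; rewrite /Q => H1; have {}H1 := H1 ltac:(lia); f_equal; lia.
- have := H a'; rewrite /Q => H1; have {}H1 := H1 ltac:(lia); lia.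
- have := H 0; rewrite /Q => H1; have {}H1 := H1 ltac:(lia); lia.
- have := H a; rewrite /Q => H1; have {}H1 := H1 ltac:(lia); lia.
- have := H a; have := H a'; rewrite /Q => H1 H2.
  have {}H1 := H1 ltac:(lia); have {}H2 := H2 ltac:(lia); f_equal; lia.
- have := H 0; rewrite /Q => H1; have {}H1 := H1 ltac:(lia); lia.
- have := H 0; rewrite /Q => H1; have {}H1 := H1 ltac:(lia); lia.
- have := H 0; rewrite /Q => H1; have {}H1 := H1 ltac:(lia); lia.
- by rewrite Hl.
Qed.

Lemma head_word n w x : valid n w -> val (head x (word n w)) = Q n (cw n w) (Kw w) 0.
Proof.
move/valid_len; rewrite /word /raw; case: (lenw w) => // l _.
by rewrite /= val_st.
Qed.

Lemma all_word n (s : Sn n) w : valid n w ->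
  (all (kmu (Kx s)) (word n w) <-> exists m, w = WC m).
Proof.
move=> V; rewrite /word /raw all_map; split.
  move/allP => H; case: w V H => [L j|a m|m] /= V H; last by exists m.
  + have := H 0; rewrite mem_iota /= /mu_n val_st /Q => H1; have {}H1 := H1 ltac:(lia).
    move/eqP: H1; lia.
  + have := H 0; rewrite mem_iota /= /mu_n val_st /Q => H1; have {}H1 := H1 ltac:(lia).
    move/eqP: H1; lia.
case=> m ->; apply/allP => i _; rewrite /= /mu_n val_st /Q; apply/eqP; lia.
Qed.
Fixpoint asat n (w : wt) (f : hs) : Prop :=
  match f with
  | HP => exists m, w = WC m
  | HNeg g => ~ asat n w g
  | HAnd g h => asat n w g /\ asat n w h
  | HB g => exists i, 0 < i < lenw w /\ asat n (prefT n w i) g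
  | HE g => exists k, 0 < k < lenw w /\ asat n (sufT w k) g
  | HBbar g => exists w', valid n w' /\ exists i, 0 < i < lenw w' /\ prefT n w' i = w /\ asat n w' g
  | HEbar g => exists w', valid n w' /\ exists k, 0 < k < lenw w' /\ sufT w' k = w /\ asat n w' g
  end.

Lemma sat_asat n (s : Sn n) f : forall w, valid n w ->
  (@sat (Kx s) (word n w) f <-> asat n w f).
Proof.
elim: f => [|g IH|g IHg h IHh|g IH|g IH|g IH|g IH] w V /=.
- exact: all_word.
- by rewrite IH.
- by rewrite IHg // IHh.
- split.
    case=> r [[i [Hi ->]] Hr]; rewrite size_word in Hi.
    exists i; split => //; rewrite -IH; last exact: valid_prefT.
    by rewrite -word_prefT.
  case=> i [Hi Ha]; exists (word n (prefT n w i)); split.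
    by exists i; rewrite size_word word_prefT.
  by rewrite IH //; exact: valid_prefT.
- split.
    case=> r [[i [Hi ->]] Hr]; rewrite size_word in Hi.
    exists i; split => //; rewrite -IH; last exact: valid_sufT.
    by rewrite -word_sufT.
  case=> i [Hi Ha]; exists (word n (sufT w i)); split.
    by exists i; rewrite size_word word_sufT.
  by rewrite IH //; exact: valid_sufT.
- split.
    case=> r [Ht [[i [Hi E]] Hr]].
    have [w' [V' Ew']] := trace_word Ht; subst r.
    rewrite size_word in Hi; rewrite word_prefT // in E.
    have E' := word_inj V (valid_prefT V' Hi) E.
    exists w'; split => //; exists i; split => //; split; first by [].
    by rewrite -IH.
  case=> w' [V' [i [Hi [E Ha]]]]; exists (word n w'); split; first exact: word_trace.
  split; last by rewrite IH.
  by exists i; rewrite size_word word_prefT // E.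
- split.
    case=> r [Ht [[i [Hi E]] Hr]].
    have [w' [V' Ew']] := trace_word Ht; subst r.
    rewrite size_word in Hi; rewrite word_sufT // in E.
    have E' := word_inj V (valid_sufT V' Hi) E.
    exists w'; split => //; exists i; split => //; split; first by [].
    by rewrite -IH.
  case=> w' [V' [i [Hi [E Ha]]]]; exists (word n w'); split; first exact: word_trace.
  split; last by rewrite IH.
  by exists i; rewrite size_word word_sufT // E.
Qed.
Definition sim (T x y : nat) : Prop := x = y \/ (T <= x /\ T <= y).

Definition R n T w1 w2 : Prop :=
  match w1, w2 with
  | WA L j, WA L' j' => sim T L L' /\ sim T (n.*2.+1 - j) (n.*2.+1 - j')
  | WB a m, WB a' m' => sim T a a' /\ sim T m m'
  | WC m, WC m' => sim T m m'
  | _, _ => False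
  end.

Lemma R_sym n T w1 w2 : R n T w1 w2 -> R n T w2 w1.
Proof. case: w1 w2 => [L j|a m|m] [L' j'|a' m'|m'] //=; rewrite /sim; lia. Qed.

Lemma R_mono n T T' w1 w2 : T' <= T -> R n T w1 w2 -> R n T' w1 w2.
Proof. move=> H; case: w1 w2 => [L j|a m|m] [L' j'|a' m'|m'] //=; rewrite /sim; lia. Qed.

Lemma gameE n T T' w1 w2 k : R n T w1 w2 -> T'.+1 <= T -> 0 < T' ->
  valid n w1 -> valid n w2 -> 0 < k < lenw w1 ->
  exists k2, 0 < k2 < lenw w2 /\ R n T' (sufT w1 k) (sufT w2 k2).
Proof.
case: w1 w2 => [L j|a m|m] [L2 j2|a2 m2|m2] //= HR HT HT' V1 V2 Hk; rewrite /sim in HR.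
- exists (L2 - minn (L - k) T'); move: HR; rewrite /sim; lia.
- case: (ltnP k a) => Hka.
    exists (a2 - minn (a - k) T').
    have -> : (a2 - minn (a - k) T' < a2) = true by apply/idP; lia.
    move: HR; rewrite /= /sim; lia.
  exists (a2 + m2 - minn (a + m - k) T').
  have -> : (a2 + m2 - minn (a + m - k) T' < a2) = false by apply/negbTE; rewrite -leqNgt; lia.
  move: HR; rewrite /= /sim; lia.
- exists (m2 - minn (m - k) T'); move: HR; rewrite /sim; lia.
Qed.
Lemma gameB n T T' w1 w2 i : R n T w1 w2 -> T' + T' + 2 <= T -> 0 < T' -> T <= n ->
  valid n w1 -> valid n w2 -> 0 < i < lenw w1 ->
  exists i2, 0 < i2 < lenw w2 /\ R n T' (prefT n w1 i) (prefT n w2 i2).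
Proof.
case: w1 w2 => [L j|a m|m] [L2 j2|a2 m2|m2] //= HR HT HT' Hn V1 V2 Hk; rewrite /sim in HR.
- case: (ltnP i T') => Hi.
    exists i; rewrite /= /sim; lia.
  exists (L2 - minn (L - i) T'); rewrite /= /sim; lia.
- case: (ltnP a i) => Hai.
    exists (a2 + minn (i - a) T').
    have -> : (a2 < a2 + minn (i - a) T') = true by apply/idP; lia.
    rewrite /= /sim; lia.
  case: (ltnP i T') => Hi.
    exists i.
    have -> : (a2 < i) = false by apply/negbTE; rewrite -leqNgt; lia.
    rewrite /= /sim; lia.
  exists (a2 - minn (a - i) T').
  have -> : (a2 < a2 - minn (a - i) T') = false by apply/negbTE; rewrite -leqNgt; lia.
  rewrite /= /sim; lia.
- exists (minn i T'); rewrite /= /sim; lia.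
Qed.

Lemma gameEbar n T T' w1 w2 w1' k : R n T w1 w2 -> T' <= T ->
  valid n w1 -> valid n w2 -> valid n w1' -> 0 < k < lenw w1' -> sufT w1' k = w1 ->
  exists w2', valid n w2' /\ exists k2, 0 < k2 < lenw w2' /\ sufT w2' k2 = w2 /\ R n T' w1' w2'.
Proof.
move=> HR HT V1 V2 V1' Hk E; subst w1.
case: w1' V1' Hk HR V1 => [L j|a m|m] /= V1' Hk.
- case: w2 V2 => [L2 j2|a2 m2|m2] //= V2 HR V1; rewrite /sim in HR.
  exists (WA (L2 + k) j2); split; first by rewrite /=; lia.
  exists k; split; first by rewrite /=; lia.
  split; first by rewrite /= addnK.
  rewrite /= /sim; lia.
- case: (ltnP k a) => Hka /=.
    case: w2 V2 => [L2 j2|a2 m2|m2] //= V2 HR V1; rewrite /sim in HR.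
    exists (WB (a2 + k) m2); split; first by rewrite /=; lia.
    exists k; split; first by rewrite /=; lia.
    split; last by rewrite /= /sim; lia.
    rewrite /=; have -> : (k < a2 + k) = true by apply/idP; lia.
    by rewrite addnK.
  case: w2 V2 => [L2 j2|a2 m2|m2] //= V2 HR V1; rewrite /sim in HR.
  exists (WB a (m2 + k - a)); split; first by rewrite /=; lia.
  exists k; split; first by rewrite /=; lia.
  split; last by rewrite /= /sim; lia.
  rewrite /=; have -> : (k < a) = false by apply/negbTE; rewrite -leqNgt; lia.
  congr WC; lia.
- case: w2 V2 => [L2 j2|a2 m2|m2] //= V2 HR V1; rewrite /sim in HR.
  exists (WC (m2 + k)); split; first by rewrite /=; lia.
  exists k; split; first by rewrite /=; lia.
  split; first by rewrite /= addnK.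
  rewrite /= /sim; lia.
Qed.
Lemma gameBbar n T T' w1 w2 w1' i : R n T w1 w2 -> T' + T' + 2 <= T -> 0 < T' -> T <= n ->
  valid n w1 -> valid n w2 -> valid n w1' -> 0 < i < lenw w1' -> prefT n w1' i = w1 ->
  exists w2', valid n w2' /\ exists i2, 0 < i2 < lenw w2' /\ prefT n w2' i2 = w2 /\ R n T' w1' w2'.
Proof.
move=> HR HT HT' Hn V1 V2 V1' Hk E; subst w1.
case: w1' V1' Hk HR V1 => [L j|a m|m] /= V1' Hk.
- case: w2 V2 => [L2 j2|a2 m2|m2] //= V2 HR V1; rewrite /sim in HR.
  case: (ltnP (n.*2.+1 - j) T') => Hd.
    exists (WA (L2 + ((n.*2.+1 - j2) - (n.*2.+1 - j))) j); split; first by rewrite /=; lia.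
    exists L2; split; first by rewrite /=; lia.
    split; first by rewrite /=; congr WA; lia.
    rewrite /= /sim; lia.
  exists (WA (L2 + minn (L - i) T') (j2 + minn (L - i) T')); split; first by rewrite /=; lia.
  exists L2; split; first by rewrite /=; lia.
  split; first by rewrite /=; congr WA; lia.
  rewrite /= /sim; lia.
- case: (ltnP a i) => Hai /=.
    case: w2 V2 => [L2 j2|a2 m2|m2] //= V2 HR V1; rewrite /sim in HR.
    exists (WB a2 (m2 + m - (i - a))); split; first by rewrite /=; lia.
    exists (a2 + m2); split; first by rewrite /=; lia.
    split; last by rewrite /= /sim; lia.
    rewrite /=; have -> : (a2 < a2 + m2) = true by apply/idP; lia.
    congr WB; lia.
  case: w2 V2 => [L2 j2|a2 m2|m2] //= V2 HR V1; rewrite /sim in HR.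
  exists (WB (if 0 < j2 then L2 + n.*2 - j2 else L2 + maxn (a - i) n.*2) m).
  split; first by rewrite /=; case: ifP; lia.
  exists L2; split; first by rewrite /=; case: ifP; lia.
  split.
    rewrite /=; case: (posnP j2) => Hj2 /=.
      have -> : (L2 + maxn (a - i) n.*2 < L2) = false by apply/negbTE; rewrite -leqNgt; lia.
      congr WA; lia.
    have -> : (L2 + n.*2 - j2 < L2) = false by apply/negbTE; rewrite -leqNgt; lia.
    congr WA; lia.
  rewrite /= /sim; case: (posnP j2) => Hj2 /=; lia.
- case: w2 V2 => [L2 j2|a2 m2|m2] //= V2 HR V1; rewrite /sim in HR.
  exists (WC (m2 + m - i)); split; first by rewrite /=; lia.
  exists m2; split; first by rewrite /=; lia.
  split; first by rewrite /=; congr WC; lia.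
  rewrite /= /sim; lia.
Qed.
Lemma size_pos f : 0 < hs_size f.
Proof. by case: f. Qed.

Lemma game n : forall s f, hs_size f <= s -> balanced f ->
  forall T w1 w2, hs_size f <= T -> T <= n -> valid n w1 -> valid n w2 -> R n T w1 w2 ->
  (asat n w1 f <-> asat n w2 f).
Proof.
elim=> [|s IH] f Hs Hb T w1 w2 HT Hn V1 V2 HR.
  by have := size_pos f; lia.
case: f Hs Hb HT => [|g|g h|g|g|g|g] /= Hs Hb HT.
- case: w1 w2 HR {V1 V2} => [L j|a m|m] [L2 j2|a2 m2|m2] //= _;
  split; case=> x E //.
  by exists m2.
  by exists m.
- rewrite (IH g _ _ T w1 w2) //; lia.
- case: Hb => Hg Hh; rewrite (IH g _ _ T w1 w2) // ?(IH h _ _ T w1 w2) //; lia.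
- case: g Hs Hb HT => [|x|g1 g2|x|x|x|x] /= Hs Hb HT; try by case: Hb.
  case: Hb => [[Hb1 Hb2] Heq].
  have key : forall w1 w2, valid n w1 -> valid n w2 -> R n T w1 w2 ->
      (exists i, 0 < i < lenw w1 /\ asat n (prefT n w1 i) g1 /\ asat n (prefT n w1 i) g2) ->
      (exists i, 0 < i < lenw w2 /\ asat n (prefT n w2 i) g1 /\ asat n (prefT n w2 i) g2).
    move=> u1 u2 U1 U2 HU [i [Hi [A1 A2]]].
    have [i2 [Hi2 HR']] := gameB (T' := hs_size g1) HU ltac:(lia) (size_pos g1) Hn U1 U2 Hi.
    have W1 := valid_prefT U1 Hi; have W2 := valid_prefT U2 Hi2.
    exists i2; split => //; split.
      by rewrite -(IH g1 _ _ (hs_size g1) _ _ _ _ W1 W2 HR') //; lia.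
    by rewrite -(IH g2 _ _ (hs_size g1) _ _ _ _ W1 W2 HR') //; lia.
  split; apply: key => //; exact: R_sym.
- have key : forall w1 w2, valid n w1 -> valid n w2 -> R n T w1 w2 ->
      (exists k, 0 < k < lenw w1 /\ asat n (sufT w1 k) g) ->
      (exists k, 0 < k < lenw w2 /\ asat n (sufT w2 k) g).
    move=> u1 u2 U1 U2 HU [k [Hk A]].
    have [k2 [Hk2 HR']] := gameE (T' := T.-1) HU ltac:(lia) ltac:(have := size_pos g; lia) U1 U2 Hk.
    have W1 := valid_sufT U1 Hk; have W2 := valid_sufT U2 Hk2.
    exists k2; split => //.
    by rewrite -(IH g _ _ T.-1 _ _ _ _ W1 W2 HR') //; lia.
  split; apply: key => //; exact: R_sym.
- case: g Hs Hb HT => [|x|g1 g2|x|x|x|x] /= Hs Hb HT; try by case: Hb.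
  case: Hb => [[Hb1 Hb2] Heq].
  have key : forall w1 w2, valid n w1 -> valid n w2 -> R n T w1 w2 ->
      (exists w', valid n w' /\ exists i, 0 < i < lenw w' /\ prefT n w' i = w1 /\
          asat n w' g1 /\ asat n w' g2) ->
      (exists w', valid n w' /\ exists i, 0 < i < lenw w' /\ prefT n w' i = w2 /\
          asat n w' g1 /\ asat n w' g2).
    move=> u1 u2 U1 U2 HU [w' [V' [i [Hi [E [A1 A2]]]]]].
    have [w2' [V2' [i2 [Hi2 [E2 HR']]]]] :=
      gameBbar (T' := hs_size g1) HU ltac:(lia) (size_pos g1) Hn U1 U2 V' Hi E.
    exists w2'; split => //; exists i2; split => //; split => //; split.
      by rewrite -(IH g1 _ _ (hs_size g1) _ _ _ _ V' V2' HR') //; lia.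
    by rewrite -(IH g2 _ _ (hs_size g1) _ _ _ _ V' V2' HR') //; lia.
  split; apply: key => //; exact: R_sym.
- have key : forall w1 w2, valid n w1 -> valid n w2 -> R n T w1 w2 ->
      (exists w', valid n w' /\ exists k, 0 < k < lenw w' /\ sufT w' k = w1 /\ asat n w' g) ->
      (exists w', valid n w' /\ exists k, 0 < k < lenw w' /\ sufT w' k = w2 /\ asat n w' g).
    move=> u1 u2 U1 U2 HU [w' [V' [k [Hk [E A]]]]].
    have [w2' [V2' [k2 [Hk2 [E2 HR']]]]] :=
      gameEbar (T' := T) HU (leqnn T) U1 U2 V' Hk E.
    exists w2'; split => //; exists k2; split => //; split => //.
    by rewrite -(IH g _ _ T _ _ _ _ V' V2' HR') //; lia.
  split; apply: key => //; exact: R_sym.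
Qed.
Lemma init_KM n w2 : 1 <= n -> valid n w2 -> 1 = Q n (cw n w2) (Kw w2) 0 ->
  exists w1, valid n w1 /\ 0 = Q n (cw n w1) (Kw w1) 0 /\ R n n w1 w2.
Proof.
move=> Hn; case: w2 => [L j|a m|m] /= V; rewrite /Q => HQ.
- case: (leqP L n.+1) => HL.
    exists (WA L (L - 1)); rewrite /= /Q /sim; lia.
  exists (WA L.+1 L); rewrite /= /Q /sim; lia.
- exists (WB n.*2.+1 m); rewrite /= /Q /sim; lia.
- lia.
Qed.

Lemma init_MK n w1 : 1 <= n -> valid n w1 -> 0 = Q n (cw n w1) (Kw w1) 0 ->
  exists w2, valid n w2 /\ 1 = Q n (cw n w2) (Kw w2) 0 /\ R n n w2 w1.
Proof.
move=> Hn; case: w1 => [L j|a m|m] /= V; rewrite /Q => HQ.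
- case: (ltnP L n) => HL.
    exists (WA L L); rewrite /= /Q /sim; lia.
  case: (ltnP (n.*2.+1 - j) n) => Hd.
    exists (WA j j); rewrite /= /Q /sim; lia.
  exists (WA n n); rewrite /= /Q /sim; lia.
- exists (WB n.*2 m); rewrite /= /Q /sim; lia.
- lia.
Qed.

Lemma transfer n psi (s s' : Sn n) : balanced psi -> hs_size psi <= n ->
  (forall w, valid n w -> nat_of_ord s' = Q n (cw n w) (Kw w) 0 ->
     exists w', valid n w' /\ nat_of_ord s = Q n (cw n w') (Kw w') 0 /\ R n n w' w) ->
  models_st (Kx s) psi -> models_st (Kx s') psi.
Proof.
move=> Hb Hs Hmap H rho [Ht Hh].
have [w [V Ew]] := trace_word Ht; subst rho.
have Hq : nat_of_ord s' = Q n (cw n w) (Kw w) 0.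
  by rewrite -(head_word s' V); rewrite /= in Hh; rewrite Hh.
have [w' [V' [Hq' HR]]] := Hmap w V Hq.
have Hi : @initial_trace (Kx s) (word n w').
  split; first exact: word_trace.
  by apply: val_inj; rewrite /= head_word.
have := H _ Hi; rewrite !sat_asat // => A.
by rewrite -(game (leqnn _) Hb Hs (leqnn n) V' V HR).
Qed.
Theorem lemma5p9 (n : nat) (psi : hs) :
  1 <= n -> balanced psi -> hs_size psi <= n ->
  (models_st (K_n n) psi <-> models_st (M_n n) psi).
Proof.
move=> Hn Hb Hs; split.
  apply: (@transfer n psi (s0 n) (s1 n) Hb Hs) => w V HQ.
  exact: init_KM.
apply: (@transfer n psi (s1 n) (s0 n) Hb Hs) => w V HQ.
exact: init_MK.
Qed.
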